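(* Assume conditions (G) and (B) hold and let $\alpha\in(0,1)$ satisfy $r_n<\alpha$ and $\alpha+2r_n<1$. Let $r_n'=2r_n+\delta_n$. Then with probability at least $1-\alpha-r_n'$, $$V(\pi)\ge LV_{1-\alpha}(\pi):=\widehat V(\pi)-\widehat q_{1-\alpha,\Pi}\,\widehat s(\pi)\quad\text{for all }\pi\in\Pi;$$ equivalently, $\max_{\pi\in\Pi}\widehat Z_\pi\le\widehat q_{1-\alpha,\Pi}$ with probability at least $1-\alpha-r_n'$.
   Context: Setting. $\Pi$ is a finite nonempty set of policies. $V:\Pi\to\mathbb R$ is a deterministic welfare function; on a probability space (the data), $(\widehat V(\pi))_{\pi\in\Pi}$ are real random variables and $(\widehat s(\pi))_{\pi\in\Pi}$ strictly positive random variables. $\widehat Z_\pi=(\widehat V(\pi)-V(\pi))/\widehat s(\pi)$. $(Z_\pi)_{\pi\in\Pi}$ is a centered Gaussian vector with $\mathrm{Var}(Z_\pi)=1$ for all $\pi$. $\mathcal A$ is the collection of rectangles in $\mathbb R^\Pi$ (products of possibly unbounded intervals). Condition (G): there is $r_n\ge0$ with $|\Pr((\widehat Z_\pi)_\pi\in A)-\Pr((Z_\pi)_\pi\in A)|\le r_n$ for all $A\in\mathcal A$. Bootstrap: $\widehat C$ is a data-dependent positive semidefinite $|\Pi|\times|\Pi|$ matrix; conditionally on the data, $(\widehat Z^*_\pi)_{\pi\in\Pi}\sim N(0,\widehat C)$, and $\Pr^*$ denotes this conditional probability given the data. Condition (B): there is $\delta_n\in[0,1]$ such that, with probability at least $1-\delta_n$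 over the data, $|\Pr^*((\widehat Z^*_\pi)_\pi\in A)-\Pr((Z_\pi)_\pi\in A)|\le r_n$ for all $A\in\mathcal A$. Quantiles: for $\tau\in(0,1)$ the $\tau$-quantile of $X$ under $P$ is $\inf\{x:P(X\le x)\ge\tau\}$. $\widehat q_{\tau,\Pi}$ is the $\tau$-quantile of $\max_{\pi\in\Pi}\widehat Z^*_\pi$ under $\Pr^*$. *)

(* Defs.v *)
From HB Require Import structures.
From mathcomp Require Import all_boot all_order all_algebra.
From mathcomp Require Import all_classical all_reals all_analysis.
Set Implicit Arguments. Unset Strict Implicit. Unset Printing Implicit Defensive.
Import Order.TTheory GRing.Theory Num.Theory.
Local Open Scope classical_set_scope.
Local Open Scope ring_scope.

Definition centered_normal_law {R : realType} (mu : set R -> \bar R) (v : R) : Prop :=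
  0 <= v /\
  forall A : set R, measurable A ->
    mu A = (if v == 0 then \d_(0:R) A else normal_prob 0 (Num.sqrt v) A).

Definition centered_gaussian_vector {d} {T : measurableType d} {R : realType}
  (Q : probability T R) (Pi : finType) (X : Pi -> T -> R) (C : Pi -> Pi -> R) : Prop :=
  (forall p, measurable_fun setT (X p)) /\
  forall t : Pi -> R,
    centered_normal_law (fun A => Q ((fun w => \sum_p t p * X p w) @^-1` A))
                        (\sum_p \sum_q t p * t q * C p q).

Definition rect_prob {d} {T : measurableType d} {R : realType}
  (Q : probability T R) (Pi : finType) (X : Pi -> T -> R) (I : Pi -> interval R) : R :=
  fine (Q [set w | forall p, X p w \in I p]).

Definition maxf {R : realType} (Pi : finType) (f : Pi -> R) : R := sup (range f).

Definition quantile {d} {T : measurableType d} {R : realType}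
  (Q : probability T R) (X : T -> R) (tau : R) : R :=
  inf [set x : R | (tau%:E <= Q [set w | (X w <= x)%R])%E].

(* Main.v *)
Require Import Defs.
From HB Require Import structures.
From mathcomp Require Import all_boot all_order all_algebra.
From mathcomp Require Import all_classical all_reals all_analysis.
From mathcomp Require Import lra measurable_realfun.
Import Order.TTheory GRing.Theory Num.Theory.
Local Open Scope classical_set_scope.
Local Open Scope ring_scope.

Section H.
Context {R : realType} {d : measure_display} {T : measurableType d}.

Lemma prE (Q : probability T R) A : measurable A -> Q A = (fine (Q A))%:E.
Proof. by move=> mA; rewrite fineK // fin_num_measure. Qed.

Lemma pr_ge0 (Q : probability T R) A : measurable A -> 0 <= fine (Q A).
Proof. by move=> mA; rewrite -lee_fin -prE. Qed.

Lemma pr_le1 (Q : probability T R) A : measurable A -> fine (Q A) <= 1.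
Proof. by move=> mA; rewrite -lee_fin -prE // probability_le1. Qed.

Lemma pr_mono (Q : probability T R) A B : measurable A -> measurable B ->
  A `<=` B -> fine (Q A) <= fine (Q B).
Proof.
move=> mA mB AB; rewrite -lee_fin -!prE //; by apply: le_measure; rewrite ?inE.
Qed.

Lemma pr_inter (Q : probability T R) A E : measurable A -> measurable E ->
  fine (Q A) + fine (Q E) - 1 <= fine (Q (A `&` E)).
Proof.
move=> mA mE.
have mD : measurable (A `\` E) by exact: measurableD.
have mI : measurable (A `&` E) by exact: measurableI.
have mC : measurable (~` E) by exact: measurableC.
have h1 : Q A = (Q (A `\` E) + Q (A `&` E))%E by apply: measureDI.
rewrite (prE Q _ mA) (prE Q _ mD) (prE Q _ mI) -EFinD in h1.
move: h1 => [h1].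
have h2 : fine (Q (A `\` E)) <= fine (Q (~` E)).
  by apply: pr_mono => // u [].
have h3 : fine (Q (~` E)) = 1 - fine (Q E).
  by rewrite (probability_setC Q mE) (prE Q _ mE).
lra.
Qed.

Variable (Pi : finType).

Lemma meas_rect (f : Pi -> T -> R) (b : Pi -> R) :
  (forall p, measurable_fun setT (f p)) ->
  measurable [set u | forall p, f p u \in `]-oo, b p]].
Proof.
move=> mf.
have -> : [set u | forall p, f p u \in `]-oo, b p]] =
    \bigcap_(p in [set: Pi]) (f p @^-1` [set` `]-oo, b p]]).
  by apply/seteqP; split=> u /= h p; [move=> _|]; apply: h.
apply: fin_bigcap_measurable; first exact: finite_finset.
by move=> p _; rewrite -[_ @^-1` _]setTI; apply: mf => //; exact: measurable_itv.
Qed.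

End H.


Lemma small_inv {R : realType} (e : R) : 0 < e -> exists n : nat, n.+1%:R^-1 < e.
Proof.
move=> e0; exists (Num.Def.archi_bound e^-1).
have h : e^-1 < (Num.Def.archi_bound e^-1)%:R by apply: archi_boundP; rewrite invr_ge0 ltW.
set n := Num.Def.archi_bound e^-1 in h *.
rewrite -[e in _ < e]invrK ltf_pV2 ?posrE ?invr_gt0 ?ltr0Sn //.
by apply: (lt_le_trans h); rewrite ler_nat.
Qed.

Lemma test_near {P : nat -> Prop} : (\forall n \near \oo, P n) -> exists n, P n.
Proof. by case=> N _ HN; exists N; apply: HN => /=. Qed.

Section G.
Context {R : realType} {d : measure_display} {T : measurableType d}.
Variables (Q : probability T R) (Pi : finType) (X : Pi -> T -> R).
Hypothesis mX : forall p, measurable_fun setT (X p).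

Let B (x : R) := [set u | forall p, X p u \in `]-oo, x]].
Let G x := fine (Q (B x)).

Let mB x : measurable (B x).
Proof. exact: (@meas_rect _ _ _ Pi X (fun=> x) mX). Qed.

Let B_mono x y : x <= y -> B x `<=` B y.
Proof. by move=> xy u /= h p; move: (h p); rewrite !in_itv /= => /le_trans; apply. Qed.



Lemma G_right (c beta : R) :
  (forall n : nat, beta <= G (c + n.+1%:R^-1)) -> beta <= G c.
Proof.
move=> hb.
pose S n := B (c + n.+1%:R^-1).
have mS n : measurable (S n) by exact: mB.
have eqS : \bigcap_n S n = B c.
  apply/seteqP; split; last first.
    move=> u Bu n _; apply: (@B_mono c (c + n.+1%:R^-1)) Bu.
    by rewrite lerDl invr_ge0 ler0n.
  move=> u Su p; rewrite in_itv /=; rewrite leNgt; apply/negP => cu.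
  have cu' : 0 < X p u - c by rewrite subr_gt0.
  have [n hn] := small_inv _ cu'.
  have := Su n I p; rewrite in_itv /= => h.
  move: hn h; set t := n.+1%:R^-1 => hn h; lra.
have cv : (Q \o S) n @[n --> \oo] --> Q (\bigcap_n S n).
  apply: nonincreasing_cvg_mu => //.
  - by apply: (le_lt_trans (probability_le1 _ (mS 0%N))); rewrite ltry.
  - exact: bigcapT_measurable.
  - move=> n m nm; apply/subsetPset; apply: B_mono; rewrite lerD2l.
    by rewrite lef_pV2 ?posrE ?ltr0Sn // ler_nat.
rewrite eqS (prE Q _ (mB c)) in cv.
have /fine_cvgP [_ cv2] := cv.
rewrite leNgt; apply/negP => Gc.
have [n hn] := test_near (cvgr_lt _ cv2 _ Gc).
by have := hb n; rewrite /= leNgt hn.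
Qed.


Lemma G_big (g : R) : g < 1 -> exists x, g < G x.
Proof.
move=> g1.
pose S n := B n%:R.
have mS n : measurable (S n) by exact: mB.
have eqS : \bigcup_n S n = setT.
  apply/seteqP; split => // u _.
  exists (Num.Def.archi_bound (\sum_p `|X p u|)) => //= p.
  have h : \sum_q `|X q u| < (Num.Def.archi_bound (\sum_q `|X q u|))%:R.
    by apply: archi_boundP; apply: sumr_ge0 => q _.
  rewrite in_itv /=; apply: ltW; apply: le_lt_trans h.
  apply: le_trans (ler_norm _) _.
  by rewrite (bigD1 p) //= lerDl sumr_ge0.
have cv : (Q \o S) n @[n --> \oo] --> Q (\bigcup_n S n).
  apply: nondecreasing_cvg_mu => //.
  - exact: bigcupT_measurable.
  - move=> n m nm; apply/subsetPset; apply: B_mono; by rewrite ler_nat.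
rewrite eqS probability_setT in cv.
have /fine_cvgP [_ cv2] := cv.
have [n hn] := test_near (cvgr_gt _ cv2 _ g1).
by exists n%:R.
Qed.

Lemma G_small (b : R) (p0 : Pi) : 0 < b -> exists x, G x < b.
Proof.
move=> b0.
pose S n := B (- n%:R).
have mS n : measurable (S n) by exact: mB.
have eqS : \bigcap_n S n = set0.
  apply/seteqP; split => // u Su.
  have h : `|X p0 u| < (Num.Def.archi_bound `|X p0 u|)%:R.
    by apply: archi_boundP.
  have := Su (Num.Def.archi_bound `|X p0 u|) I p0.
  rewrite in_itv /= => h2.
  have h3 := ler_norm (- X p0 u); rewrite normrN in h3.
  move: h h2 h3; set m := (Num.Def.archi_bound _)%:R => h h2 h3; lra.
have cv : (Q \o S) n @[n --> \oo] --> Q (\bigcap_n S n).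
  apply: nonincreasing_cvg_mu => //.
  - by apply: (le_lt_trans (probability_le1 _ (mS 0%N))); rewrite ltry.
  - exact: bigcapT_measurable.
  - move=> n m nm; apply/subsetPset; apply: B_mono; by rewrite lerN2 ler_nat.
rewrite eqS measure0 in cv.
have /fine_cvgP [_ cv2] := cv.
have [n hn] := test_near (cvgr_lt _ cv2 _ b0).
by exists (- n%:R).
Qed.

End G.
Lemma maxf_le {R : realType} (Pi : finType) (p0 : Pi) (f : Pi -> R) x :
  (maxf f <= x) <-> (forall p, f p <= x).
Proof.
have hub : has_ubound (range f).
  exists (\sum_q `|f q|) => _ [p _ <-].
  apply: le_trans (ler_norm _) _.
  by rewrite (bigD1 p) //= lerDl sumr_ge0.
split.
- move=> h p; apply: le_trans h; apply: (ub_le_sup hub); by exists p.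
- move=> h; apply: ge_sup; first by exists (f p0), p0.
  by move=> _ [p _ <-].
Qed.

Lemma rect_mono {R : realType} {d : measure_display} {T : measurableType d}
  (Q : probability T R) (Pi : finType) (X : Pi -> T -> R) :
  (forall p, measurable_fun setT (X p)) -> forall x y, x <= y ->
  fine (Q [set u | forall p, X p u \in `]-oo, x]]) <=
  fine (Q [set u | forall p, X p u \in `]-oo, y]]).
Proof.
move=> mX x y xy; apply: pr_mono.
- exact: (@meas_rect _ _ _ Pi X (fun=> x) mX).
- exact: (@meas_rect _ _ _ Pi X (fun=> y) mX).
- by move=> u /= h p; move: (h p); rewrite !in_itv /= => /le_trans; apply.
Qed.

Theorem proposition2
  (R : realType) (Pi : finType) (Pi_ne : (0 < #|Pi|)%N)
  (V : Pi -> R)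
  (* the data *)
  (dO : measure_display) (Omega : measurableType dO) (P : probability Omega R)
  (Vhat shat : Pi -> Omega -> R)
  (Vhat_meas : forall p, measurable_fun setT (Vhat p))
  (shat_meas : forall p, measurable_fun setT (shat p))
  (shat_pos : forall p w, 0 < shat p w)
  (* the limiting Gaussian vector Z *)
  (dZ : measure_display) (TZ : measurableType dZ) (QZ : probability TZ R)
  (Z : Pi -> TZ -> R) (CZ : Pi -> Pi -> R)
  (Z_gauss : centered_gaussian_vector QZ Z CZ)
  (Z_var1 : forall p, CZ p p = 1)
  (* the bootstrap: given the data w, (Zs w p)_p ~ N(0, Chat w) under Qs *)
  (Chat : Omega -> Pi -> Pi -> R)
  (Chat_sym : forall w p q, Chat w p q = Chat w q p)
  (Chat_psd : forall w (t : Pi -> R), 0 <= \sum_p \sum_q t p * t q * Chat w p q)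
  (dS : measure_display) (TS : measurableType dS) (Qs : probability TS R)
  (Zs : Omega -> Pi -> TS -> R)
  (Zs_gauss : forall w, centered_gaussian_vector Qs (Zs w) (Chat w))
  (rn deltan alpha : R)
  (rn_ge0 : 0 <= rn)
  (deltan01 : 0 <= deltan <= 1)
  (* condition (G) *)
  (condG : forall I : Pi -> interval R,
     `| rect_prob P (fun p w => (Vhat p w - V p) / shat p w) I - rect_prob QZ Z I | <= rn)
  (* condition (B) *)
  (condB : exists E : set Omega, measurable E /\ ((1 - deltan)%:E <= P E)%E /\
     forall w, E w -> forall I : Pi -> interval R,
       `| rect_prob Qs (Zs w) I - rect_prob QZ Z I | <= rn)
  (alpha01 : 0 < alpha < 1)
  (rn_lt_alpha : rn < alpha)
  (alpha_2rn : alpha + 2 * rn < 1) :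
  let qhat := fun w => quantile Qs (fun u => maxf (fun p => Zs w p u)) (1 - alpha) in
  exists F : set Omega, measurable F /\
    F `<=` [set w | forall p, Vhat p w - qhat w * shat p w <= V p] /\
    ((1 - alpha - (2 * rn + deltan))%:E <= P F)%E.
Proof.
move=> qhat.
have mZ := Z_gauss.1.
have [p0 _] := card_gt0P Pi_ne.
set GZ := fun x => rect_prob QZ Z (fun=> `]-oo, x]).
have beta0 : 0 < 1 - alpha - rn by lra.
have [x0 hx0] := G_small QZ Pi Z mZ (1 - alpha - rn) p0 beta0.
have [x1 hx1] := G_big QZ Pi Z mZ (1 - alpha + rn) ltac:(lra).
set TT := [set x | (1 - alpha - rn) <= GZ x].
have lbT : lbound TT x0.
  move=> x /= hx; rewrite leNgt; apply/negP => xx0.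
  have := rect_mono QZ Pi Z mZ _ _ (ltW xx0).
  move: hx hx0; rewrite /TT /GZ /rect_prob /= => hx hx0 hm; lra.
have hlbT : has_lbound TT by exists x0.
have neT : TT !=set0.
  by exists x1; move: hx1; rewrite /TT /GZ /rect_prob /= => hx1; lra.
set c := inf TT.
have hc : (1 - alpha - rn) <= GZ c.
  apply: (G_right QZ Pi Z mZ) => n.
  have : inf TT < c + n.+1%:R^-1 by rewrite ltrDl invr_gt0 ltr0Sn.
  move=> /(inf_lt neT) [t Tt tlt].
  apply: (le_trans Tt); exact: (rect_mono QZ Pi Z mZ _ _ (ltW tlt)).
have [E [mE [PE hE]]] := condB.
have qc : forall w, E w -> c <= qhat w.
  move=> w Ew.
  have mZs := (Zs_gauss w).1.
  have key x : Qs [set u | maxf (fun p => Zs w p u) <= x] =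
      (rect_prob Qs (Zs w) (fun=> `]-oo, x]))%:E.
    have -> : [set u | maxf (fun p => Zs w p u) <= x] =
        [set u | forall p, Zs w p u \in `]-oo, x]].
      apply/seteqP; split => u /=.
      - by move/(maxf_le _ p0) => h p; rewrite in_itv /= h.
      - by move=> h; apply/(maxf_le _ p0) => p; move: (h p); rewrite in_itv.
    by rewrite /rect_prob -prE //; exact: (@meas_rect _ _ _ Pi (Zs w) (fun=> x) mZs).
  rewrite /qhat /quantile; apply: lb_le_inf.
  - exists x1 => /=; rewrite key lee_fin.
    have := hE w Ew (fun=> `]-oo, x1]); rewrite ler_norml => /andP [h1 h2].
    move: hx1; rewrite /GZ /rect_prob /= in h1 h2 * => hx1; lra.
  - move=> x /=; rewrite key lee_fin => hx.
    apply: ge_inf => //=.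
    have := hE w Ew (fun=> `]-oo, x]); rewrite ler_norml => /andP [h1 h2].
    rewrite /TT /GZ /rect_prob /= in h1 h2 hx *; lra.
set A := [set w | forall p, (Vhat p w - V p) / shat p w \in `]-oo, c]].
have mA : measurable A.
  have -> : A = [set w | forall p, (fun w => Vhat p w - c * shat p w) w \in `]-oo, V p]].
    apply/seteqP; split => w /= h p; move: (h p); rewrite !in_itv /= ler_pdivrMr //;
      move=> h'; lra.
  apply: (@meas_rect _ _ _ Pi (fun p w => Vhat p w - c * shat p w) V) => p.
  apply: measurable_funB => //; apply: measurable_funM => //.
have PA := condG (fun=> `]-oo, c]).
rewrite ler_norml in PA; move/andP: PA => [PA1 PA2].
have mF : measurable (A `&` E) by exact: measurableI.
exists (A `&` E); split => //; split.
- move=> w [Aw Ew] p /=.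
  have := Aw p; rewrite in_itv /= ler_pdivrMr // => h.
  have h2 : c * shat p w <= qhat w * shat p w.
    by rewrite ler_wpM2r //; [exact: ltW | exact: qc].
  lra.
- have hI := pr_inter P _ _ mA mE.
  rewrite (prE P _ mE) lee_fin in PE.
  rewrite (prE P _ mF) lee_fin.
  rewrite /rect_prob /= in PA1 PA2.
  rewrite /GZ  in hc.
  rewrite /rect_prob /= in hc; rewrite -/A in PA1 PA2; lra.
Qed.
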